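(* For $t\ge 0$ let $T_t:=e^{t(x\partial_x)^3}:\mathbb{R}[x]_{\leq 4}\to\mathbb{R}[x]_{\leq 4}$, i.e. $a_0+a_1x+a_2x^2+a_3x^3+a_4x^4\mapsto a_0+a_1e^tx+a_2e^{8t}x^2+a_3e^{27t}x^3+a_4e^{64t}x^4$. Then there exists a constant $\tau\in\mathbb{R}$ with $1.19688\cdot 10^{-2}<\tau<1.19689\cdot 10^{-2}$ such that (i) $T_t$ is not a positivity preserver for any $t\in(0,\tau)$, and (ii) $T_t$ is a positivity preserver for $t=0$ and for all $t\geq\tau$. In particular $(e^{t(x\partial_x)^3})_{t\ge0}$ on $\mathbb{R}[x]_{\le 4}$ is an eventually positive semi-group.
   Context: $\mathbb{R}[x]_{\le 4}$ denotes real univariate polynomials of degree at most $4$. Here ''$T_t$ is a positivity preserver'' means $T_t$ maps every polynomial $p\in\mathbb{R}[x]_{\le 4}$ with $p\ge 0$ on $\mathbb{R}$ to a polynomial that is $\ge 0$ on $\mathbb{R}$. A semi-group $(e^{tA})_{t\ge0}$ is called eventually positive if $e^{tA}$ is positive for all $t\ge\tau$ for some $\tau>0$ but not for $t\in(0,\tau)$. *)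

(* Defs.v *)
From Stdlib Require Import Reals.
Open Scope R_scope.

(* A polynomial p in R[x]_{<=4} is represented by its coefficient vector
   (a 0, ..., a 4); coefficients a k for k > 4 are ignored. *)
Definition poly4 := nat -> R.

Definition eval4 (a : poly4) (x : R) : R :=
  sum_f_R0 (fun k => a k * x ^ k) 4.

Definition nonneg4 (a : poly4) : Prop := forall x : R, 0 <= eval4 a x.

Definition T (t : R) (a : poly4) : poly4 :=
  fun k => a k * exp (INR (k ^ 3) * t).

Definition positivity_preserver (t : R) : Prop :=
  forall a : poly4, nonneg4 a -> nonneg4 (T t a).

(* Main.v *)
Require Import Defs.
From Stdlib Require Import Reals Lra Psatz Lia.
Open Scope R_scope.

Definition Qf (l0 l1 l2 l3 l4 v0 v1 v2 : R) : R :=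
  l0*v0^2 + 2*l1*v0*v1 + l2*(v1^2 + 2*v0*v2) + 2*l3*v1*v2 + l4*v2^2.

Definition Pf (a0 a1 a2 a3 a4 x : R) : R :=
  a0 + a1*x + a2*x^2 + a3*x^3 + a4*x^4.

Lemma sq_pos x : x <> 0 -> 0 < x^2.
Proof. intros H. destruct (Rtotal_order x 0) as [h|[h|h]]; [nra|contradiction|nra]. Qed.

Lemma psd3 l0 l1 l2 l3 l4 :
  0 < l0 -> 0 < l0*l2 - l1^2 ->
  0 <= l0*l2*l4 + 2*l1*l2*l3 - l2^3 - l1^2*l4 - l0*l3^2 ->
  forall v0 v1 v2, 0 <= Qf l0 l1 l2 l3 l4 v0 v1 v2.
Proof.
  intros H0 Hm HD v0 v1 v2.
  set (m := l0*l2 - l1^2) in *.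
  set (D := l0*l2*l4 + 2*l1*l2*l3 - l2^3 - l1^2*l4 - l0*l3^2) in *.
  assert (E : l0*m*Qf l0 l1 l2 l3 l4 v0 v1 v2 =
     m*(l0*v0 + l1*v1 + l2*v2)^2 + (m*v1 + (l0*l3 - l1*l2)*v2)^2 + l0*D*v2^2).
  { unfold m, D, Qf; ring. }
  assert (0 <= l0*m*Qf l0 l1 l2 l3 l4 v0 v1 v2).
  { rewrite E. assert (0 <= l0*D*v2^2) by (apply Rmult_le_pos; [apply Rmult_le_pos|]; nra).
    assert (0 <= m*(l0*v0 + l1*v1 + l2*v2)^2) by (apply Rmult_le_pos; [lra| apply pow2_ge_0]).
    pose proof (pow2_ge_0 (m*v1 + (l0*l3 - l1*l2)*v2)). lra. }
  assert (0 < l0*m) by (apply Rmult_lt_0_compat; lra).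
  nra.
Qed.

Lemma lead4 a0 a1 a2 a3 a4 :
  (forall x, 0 <= Pf a0 a1 a2 a3 a4 x) -> 0 <= a4.
Proof.
  intros H. destruct (Rle_or_lt 0 a4) as [|Hn]; auto. exfalso.
  set (S := Rabs a0 + Rabs a1 + Rabs a2 + Rabs a3).
  assert (HS : 0 <= S) by (unfold S; pose proof (Rabs_pos a0); pose proof (Rabs_pos a1);
     pose proof (Rabs_pos a2); pose proof (Rabs_pos a3); lra).
  set (x := 1 + S / (- a4)).
  assert (Hx1 : 1 <= x). { unfold x. assert (0 <= S/(-a4)) by (apply Rmult_le_pos; [lra| left; apply Rinv_0_lt_compat; lra]). lra. }
  assert (Hax : a4 * x = a4 - S). { unfold x. field. lra. }
  specialize (H x). unfold Pf in H.
  assert (x <= x^2) by nra. assert (x^2 <= x^3) by nra. assert (1 <= x^3) by nra.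
  assert (a0 <= Rabs a0 * x^3). { pose proof (Rle_abs a0). pose proof (Rabs_pos a0). nra. }
  assert (a1*x <= Rabs a1 * x^3). { pose proof (Rle_abs a1). pose proof (Rabs_pos a1). nra. }
  assert (a2*x^2 <= Rabs a2 * x^3). { pose proof (Rle_abs a2). pose proof (Rabs_pos a2). nra. }
  assert (a3*x^3 <= Rabs a3 * x^3). { pose proof (Rle_abs a3). pose proof (Rabs_pos a3). nra. }
  assert (a4*x^4 = (a4 - S)*x^3) by (rewrite <- Hax; ring).
  assert (0 < x^3) by lra.
  unfold S in *. nra.
Qed.

Lemma lin_zero e1 e2 e3 e4 :
  (forall h, 0 <= e1*h + e2*h^2 + e3*h^3 + e4*h^4) -> e1 = 0.
Proof.
  intros H. destruct (Req_dec e1 0) as [|Hne]; auto. exfalso.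
  set (B := Rabs e2 + Rabs (e3*e1) + Rabs (e4*e1^2)).
  assert (HB : 0 <= B) by (unfold B; pose proof (Rabs_pos e2); pose proof (Rabs_pos (e3*e1));
     pose proof (Rabs_pos (e4*e1^2)); lra).
  set (d := / (2*(1+B))).
  assert (Hd0 : 0 < d) by (unfold d; apply Rinv_0_lt_compat; lra).
  assert (HdB : B*d < 1/2). { unfold d. apply (Rmult_lt_reg_r (2*(1+B))); [lra|].
     field_simplify; lra. }
  assert (Hd1 : d <= 1). { unfold d. apply (Rmult_le_reg_r (2*(1+B))); [lra|].
     field_simplify; lra. }
  specialize (H (- e1 * d)).
  assert (Eq : e1*(-e1*d) + e2*(-e1*d)^2 + e3*(-e1*d)^3 + e4*(-e1*d)^4 =
     e1^2*d*(-1 + e2*d - (e3*e1)*d^2 + (e4*e1^2)*d^3)) by ring.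
  rewrite Eq in H.
  assert (e2*d <= Rabs e2 * d) by (pose proof (Rle_abs e2); nra).
  assert (- (e3*e1)*d^2 <= Rabs (e3*e1) * d).
  { pose proof (Rle_abs (-(e3*e1))) as Ha. rewrite Rabs_Ropp in Ha.
    pose proof (Rabs_pos (e3*e1)). assert (d^2 <= d) by nra. nra. }
  assert ((e4*e1^2)*d^3 <= Rabs (e4*e1^2) * d).
  { pose proof (Rle_abs (e4*e1^2)).
    pose proof (Rabs_pos (e4*e1^2)). assert (d^3 <= d) by nra.
    assert (0 <= d^3) by nra. nra. }
  assert (-1 + e2*d - (e3*e1)*d^2 + (e4*e1^2)*d^3 < 0) by (unfold B in HdB; nra).
  assert (0 < e1^2) by (apply sq_pos; auto). 
  assert (0 < e1^2*d) by nra. nra.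
Qed.

Lemma disc_nonneg e2 e3 e4 : 0 < e4 ->
  (forall h, 0 <= h^2*(e2 + e3*h + e4*h^2)) -> 0 <= 4*e2*e4 - e3^2.
Proof.
  intros H4 H.
  destruct (Req_dec e3 0) as [He3|He3].
  - subst e3. destruct (Rle_or_lt 0 e2); [nra|exfalso].
    set (h := Rmin 1 (-e2/(2*e4))).
    assert (0 < -e2/(2*e4)) by (apply Rdiv_lt_0_compat; lra).
    assert (Hh0 : 0 < h) by (unfold h; apply Rmin_glb_lt; lra).
    assert (Hh1 : h <= 1) by apply Rmin_l.
    assert (Hh2 : h <= -e2/(2*e4)) by apply Rmin_r.
    assert (e4*h <= -e2/2). { apply (Rmult_le_compat_l e4) in Hh2; [|lra].
      replace (e4*(-e2/(2*e4))) with (-e2/2) in Hh2 by (field; lra). lra. }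
    specialize (H h). assert (0 < h^2) by nra.
    assert (e2 + 0*h + e4*h^2 < 0) by nra. nra.
  - set (h := - e3/(2*e4)).
    assert (Hh : h <> 0). { intro C. apply He3.
      assert (e3 = h*(-(2*e4))) by (unfold h; field; lra). rewrite H0, C. ring. }
    specialize (H h). assert (0 < h^2) by (apply sq_pos; auto).
    assert (0 <= e2 + e3*h + e4*h^2).
    { apply (Rmult_le_reg_l (h^2)); auto. lra. }
    assert (E : e2 + e3*h + e4*h^2 = (4*e2*e4 - e3^2)/(4*e4)) by (unfold h; field; lra).
    rewrite E in H1.
    assert (0 <= (4*e2*e4 - e3^2)/(4*e4) * (4*e4)) by (apply Rmult_le_pos; lra).
    field_simplify in H2; lra.
Qed.

Lemma ge_negabs c z : -(Rabs c * Rabs z) <= c*z.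
Proof. rewrite <- Rabs_mult. pose proof (Rle_abs (-(c*z))). rewrite Rabs_Ropp in H. lra. Qed.

Lemma coercive a0 a1 a2 a3 a4 : 0 < a4 ->
  forall x, 1 + (Rabs a1 + Rabs a2 + Rabs a3)/a4 <= Rabs x -> a0 <= Pf a0 a1 a2 a3 a4 x.
Proof.
  intros H4 x Hx. set (S := Rabs a1 + Rabs a2 + Rabs a3) in *.
  set (y := Rabs x) in *.
  assert (HS : 0 <= S) by (unfold S; pose proof (Rabs_pos a1); pose proof (Rabs_pos a2);
     pose proof (Rabs_pos a3); lra).
  assert (0 <= S/a4) by (apply Rmult_le_pos; [lra| left; apply Rinv_0_lt_compat; lra]).
  assert (Hy1 : 1 <= y) by lra.
  assert (HyS : S <= a4*y - a4). { apply (Rmult_le_compat_l a4) in Hx; [|lra].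
     replace (a4*(1+S/a4)) with (a4 + S) in Hx by (field; lra). lra. }
  pose proof (ge_negabs a1 x). pose proof (ge_negabs a2 (x^2)). pose proof (ge_negabs a3 (x^3)).
  rewrite <- !RPow_abs in *. fold y in H1, H2, H0.
  assert (x^4 = y^4). { unfold y. rewrite RPow_abs. replace 4%nat with (2*2)%nat by reflexivity.
     rewrite !pow_mult. rewrite <- RPow_abs. rewrite Rabs_right; [reflexivity| apply Rle_ge, pow2_ge_0]. }
  unfold Pf. rewrite H3.
  assert (y <= y^2) by nra. assert (y^2 <= y^3) by nra. assert (1 <= y^3) by nra.
  assert (Rabs a1 * y <= Rabs a1 * y^3) by (apply Rmult_le_compat_l; [apply Rabs_pos| lra]).
  assert (Rabs a2 * y^2 <= Rabs a2 * y^3) by (apply Rmult_le_compat_l; [apply Rabs_pos| lra]).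
  assert (a4*y^4 >= (S + a4)*y^3) by nra.
  unfold S in *. nra.
Qed.

Lemma minimizer a0 a1 a2 a3 a4 : 0 < a4 ->
  exists x0, forall x, Pf a0 a1 a2 a3 a4 x0 <= Pf a0 a1 a2 a3 a4 x.
Proof.
  intros H4. set (M := 1 + (Rabs a1 + Rabs a2 + Rabs a3)/a4).
  assert (0 <= (Rabs a1 + Rabs a2 + Rabs a3)/a4).
  { apply Rmult_le_pos; [|left; apply Rinv_0_lt_compat; lra].
    pose proof (Rabs_pos a1); pose proof (Rabs_pos a2); pose proof (Rabs_pos a3); lra. }
  assert (HM : 1 <= M) by (unfold M; lra).
  destruct (continuity_ab_min (Pf a0 a1 a2 a3 a4) (-M) M) as [x0 [Hmin Hx0]]; [lra| |].
  { intros c _. unfold Pf. reg. }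
  exists x0. intros x. destruct (Rle_or_lt (Rabs x) M) as [Hx|Hx].
  - apply Hmin. revert Hx. unfold Rabs; destruct (Rcase_abs x); intros; lra.
  - apply Rle_trans with (Pf a0 a1 a2 a3 a4 0).
    + apply Hmin. lra.
    + replace (Pf a0 a1 a2 a3 a4 0) with a0 by (unfold Pf; ring).
      apply coercive; auto. unfold M in Hx; lra.
Qed.

Lemma pos_case l0 l1 l2 l3 l4 a0 a1 a2 a3 a4 : 0 < a4 ->
  (forall v0 v1 v2, 0 <= Qf l0 l1 l2 l3 l4 v0 v1 v2) ->
  (forall x, 0 <= Pf a0 a1 a2 a3 a4 x) ->
  0 <= a0*l0 + a1*l1 + a2*l2 + a3*l3 + a4*l4.
Proof.
  intros H4 HQ HP.
  destruct (minimizer a0 a1 a2 a3 a4 H4) as [x0 Hx0].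
  set (e1 := a1 + 2*a2*x0 + 3*a3*x0^2 + 4*a4*x0^3).
  set (e2 := a2 + 3*a3*x0 + 6*a4*x0^2).
  set (e3 := a3 + 4*a4*x0).
  assert (Hsh : forall h, Pf a0 a1 a2 a3 a4 (x0+h) - Pf a0 a1 a2 a3 a4 x0 =
     e1*h + e2*h^2 + e3*h^3 + a4*h^4).
  { intros h. unfold Pf, e1, e2, e3. ring. }
  assert (He1 : e1 = 0).
  { apply (lin_zero e1 e2 e3 a4). intros h. rewrite <- Hsh. specialize (Hx0 (x0+h)). lra. }
  assert (Hd : 0 <= 4*e2*a4 - e3^2).
  { apply disc_nonneg; auto. intros h. specialize (Hx0 (x0+h)). specialize (Hsh h).
    rewrite He1 in Hsh.
    replace (h^2*(e2 + e3*h + a4*h^2)) with (0*h + e2*h^2 + e3*h^3 + a4*h^4) by ring. lra. }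
  assert (Hm : 0 <= Pf a0 a1 a2 a3 a4 x0) by apply HP.
  set (s := e3/(2*a4)).
  set (K := (4*e2*a4 - e3^2)/(4*a4)).
  assert (HK : 0 <= K) by (unfold K; apply Rmult_le_pos; [lra| left; apply Rinv_0_lt_compat; lra]).
  assert (Ha1 : a1 = -(2*a2*x0 + 3*a3*x0^2 + 4*a4*x0^3)) by (unfold e1 in He1; lra).
  assert (E : a0*l0 + a1*l1 + a2*l2 + a3*l3 + a4*l4 =
     Pf a0 a1 a2 a3 a4 x0 * l0 + a4 * Qf l0 l1 l2 l3 l4 (x0^2 - s*x0) (s - 2*x0) 1
     + K * Qf l0 l1 l2 l3 l4 (-x0) 1 0).
  { unfold Pf, Qf, K, s, e2, e3. rewrite Ha1. field. lra. }
  rewrite E.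
  assert (0 <= l0) by (specialize (HQ 1 0 0); unfold Qf in HQ; lra).
  pose proof (HQ (x0^2 - s*x0) (s - 2*x0) 1). pose proof (HQ (-x0) 1 0).
  assert (0 <= Pf a0 a1 a2 a3 a4 x0 * l0) by (apply Rmult_le_pos; auto).
  assert (0 <= a4 * Qf l0 l1 l2 l3 l4 (x0^2 - s*x0) (s - 2*x0) 1) by (apply Rmult_le_pos; lra).
  assert (0 <= K * Qf l0 l1 l2 l3 l4 (-x0) 1 0) by (apply Rmult_le_pos; lra).
  lra.
Qed.

Lemma main_L l0 l1 l2 l3 l4 a0 a1 a2 a3 a4 :
  (forall v0 v1 v2, 0 <= Qf l0 l1 l2 l3 l4 v0 v1 v2) ->
  (forall x, 0 <= Pf a0 a1 a2 a3 a4 x) ->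
  0 <= a0*l0 + a1*l1 + a2*l2 + a3*l3 + a4*l4.
Proof.
  intros HQ HP.
  pose proof (lead4 _ _ _ _ _ HP) as H4.
  destruct H4 as [H4|H4]; [apply pos_case; auto|].
  subst a4.
  assert (Hl4 : 0 <= l4) by (specialize (HQ 0 0 1); unfold Qf in HQ; lra).
  assert (Heps : forall eps, 0 < eps -> 0 <= a0*l0 + a1*l1 + a2*l2 + a3*l3 + 0*l4 + eps*l4).
  { intros eps He.
    replace (a0*l0 + a1*l1 + a2*l2 + a3*l3 + 0*l4 + eps*l4) with
      (a0*l0 + a1*l1 + a2*l2 + a3*l3 + eps*l4) by ring.
    apply pos_case; auto. intros x. specialize (HP x). unfold Pf in *.
    assert (0 <= eps * x^4) by (apply Rmult_le_pos; [lra| replace (x^4) with ((x^2)^2) by ring; apply pow2_ge_0]).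
    lra. }
  set (L := a0*l0 + a1*l1 + a2*l2 + a3*l3 + 0*l4) in *.
  destruct (Rle_or_lt 0 L) as [|HL]; auto. exfalso.
  destruct Hl4 as [Hl4|Hl4].
  - specialize (Heps (-L/(2*l4))).
    assert (0 < -L/(2*l4)) by (apply Rdiv_lt_0_compat; lra).
    specialize (Heps H). replace (-L/(2*l4)*l4) with (-L/2) in Heps by (field; lra). lra.
  - specialize (Heps 1 Rlt_0_1). rewrite <- Hl4 in Heps. lra.
Qed.

Lemma up_step z w U V : w = 2*z -> exp z <= U -> U*U <= V -> exp w <= V.
Proof. intros -> H1 H2. replace (2*z) with (z+z) by ring. rewrite exp_plus.
  pose proof (exp_pos z). nra. Qed.
Lemma lo_step z w L V : w = 2*z -> 0 <= L -> L <= exp z -> V <= L*L -> V <= exp w.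
Proof. intros -> H0 H1 H2. replace (2*z) with (z+z) by ring. rewrite exp_plus. nra. Qed.
Lemma up_base z U : 0 < z < 1 /\ 1 <= U*(1-z) -> exp z <= U.
Proof. intros [Hz HU]. pose proof (exp_ineq1 (-z)). assert (exp z * exp (-z) = 1).
  { rewrite <- exp_plus. replace (z + -z) with 0 by ring. apply exp_0. }
  pose proof (exp_pos z). assert (- z <> 0) by lra. specialize (H H2). nra. Qed.
Lemma lo_base z L : 0 < z /\ L <= 1 + z -> L <= exp z.
Proof. intros [Hz HL]. pose proof (exp_ineq1 z). assert (z <> 0) by lra. specialize (H H0). lra. Qed.
Lemma exp_up_a : exp (718128/10000000) <= 10744543/10000000.
Proof.
  assert (H16 : exp (718128/655360000000) <= (200000219155513583/200000000000000000)) by (apply up_base; split; [split|]; lra).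
  assert (H15 : exp (718128/327680000000) <= (1000002191556336559/1000000000000000000)) by (apply (up_step (718128/655360000000) _ (200000219155513583/200000000000000000)); [lra|exact H16|lra]).
  assert (H14 : exp (718128/163840000000) <= (500002191558738019/500000000000000000)) by (apply (up_step (718128/327680000000) _ (1000002191556336559/1000000000000000000)); [lra|exact H15|lra]).
  assert (H13 : exp (718128/81920000000) <= (200001753250832759/200000000000000000)) by (apply (up_step (718128/163840000000) _ (500002191558738019/500000000000000000)); [lra|exact H14|lra]).
  assert (H12 : exp (718128/40960000000) <= (1000017532585174803/1000000000000000000)) by (apply (up_step (718128/81920000000) _ (200001753250832759/200000000000000000)); [lra|exact H13|lra]).
  assert (H11 : exp (718128/20480000000) <= (1000035065477741149/1000000000000000000)) by (apply (up_step (718128/40960000000) _ (1000017532585174803/1000000000000000000)); [lra|exact H12|lra]).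
  assert (H10 : exp (718128/10240000000) <= (250017533046267507/250000000000000000)) by (apply (up_step (718128/20480000000) _ (1000035065477741149/1000000000000000000)); [lra|exact H11|lra]).
  assert (H9 : exp (718128/5120000000) <= (1000140269288663439/1000000000000000000)) by (apply (up_step (718128/10240000000) _ (250017533046267507/250000000000000000)); [lra|exact H10|lra]).
  assert (H8 : exp (718128/2560000000) <= (1000280558252800221/1000000000000000000)) by (apply (up_step (718128/5120000000) _ (1000140269288663439/1000000000000000000)); [lra|exact H9|lra]).
  assert (H7 : exp (718128/1280000000) <= (1000561195218533657/1000000000000000000)) by (apply (up_step (718128/2560000000) _ (1000280558252800221/1000000000000000000)); [lra|exact H8|lra]).
  assert (H6 : exp (718128/640000000) <= (50056135268857031/50000000000000000)) by (apply (up_step (718128/1280000000) _ (1000561195218533657/1000000000000000000)); [lra|exact H7|lra]).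
  assert (H5 : exp (718128/320000000) <= (1002246671221645101/1000000000000000000)) by (apply (up_step (718128/640000000) _ (50056135268857031/50000000000000000)); [lra|exact H6|lra]).
  assert (H4 : exp (718128/160000000) <= (1004498389974868371/1000000000000000000)) by (apply (up_step (718128/320000000) _ (1002246671221645101/1000000000000000000)); [lra|exact H5|lra]).
  assert (H3 : exp (718128/80000000) <= (1009017015462102739/1000000000000000000)) by (apply (up_step (718128/160000000) _ (1004498389974868371/1000000000000000000)); [lra|exact H4|lra]).
  assert (H2 : exp (718128/40000000) <= (509057668746024639/500000000000000000)) by (apply (up_step (718128/80000000) _ (1009017015462102739/1000000000000000000)); [lra|exact H3|lra]).
  assert (H1 : exp (718128/20000000) <= (1036558840436549403/1000000000000000000)) by (apply (up_step (718128/40000000) _ (509057668746024639/500000000000000000)); [lra|exact H2|lra]).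
  assert (H0 : exp (718128/10000000) <= (537227114843581943/500000000000000000)) by (apply (up_step (718128/20000000) _ (1036558840436549403/1000000000000000000)); [lra|exact H1|lra]).
  assert ((537227114843581943/500000000000000000) <= 10744543/10000000) by lra.
  replace (718128/10000000) with (718128/10000000) by lra. lra.
Qed.

Lemma exp_lo_b : 10744547/10000000 <= exp (718134/10000000).
Proof.
  assert (H16 : (50000054789276123/50000000000000000) <= exp (718134/655360000000)) by (apply lo_base; split; lra).
  assert (H15 : (200000438314449133/200000000000000000) <= exp (718134/327680000000)) by (apply (lo_step (718134/655360000000) _ (50000054789276123/50000000000000000)); [lra|lra|exact H16|lra]).
  assert (H14 : (500002191574647159/500000000000000000) <= exp (718134/163840000000)) by (apply (lo_step (718134/327680000000) _ (200000438314449133/200000000000000000)); [lra|lra|exact H15|lra]).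
  assert (H13 : (1000008766317800633/1000000000000000000) <= exp (718134/81920000000)) by (apply (lo_step (718134/163840000000) _ (500002191574647159/500000000000000000)); [lra|lra|exact H14|lra]).
  assert (H12 : (1000017532712449593/1000000000000000000) <= exp (718134/40960000000)) by (apply (lo_step (718134/81920000000) _ (1000008766317800633/1000000000000000000)); [lra|lra|exact H13|lra]).
  assert (H11 : (1000035065732295191/1000000000000000000) <= exp (718134/20480000000)) by (apply (lo_step (718134/40960000000) _ (1000017532712449593/1000000000000000000)); [lra|lra|exact H12|lra]).
  assert (H10 : (1000070132694195963/1000000000000000000) <= exp (718134/10240000000)) by (apply (lo_step (718134/20480000000) _ (1000035065732295191/1000000000000000000)); [lra|lra|exact H11|lra]).
  assert (H9 : (1000140270306986721/1000000000000000000) <= exp (718134/5120000000)) by (apply (lo_step (718134/10240000000) _ (1000070132694195963/1000000000000000000)); [lra|lra|exact H10|lra]).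
  assert (H8 : (62517535018108279/62500000000000000) <= exp (718134/2560000000)) by (apply (lo_step (718134/5120000000) _ (1000140270306986721/1000000000000000000)); [lra|lra|exact H9|lra]).
  assert (H7 : (500280599646770551/500000000000000000) <= exp (718134/1280000000)) by (apply (lo_step (718134/2560000000) _ (62517535018108279/62500000000000000)); [lra|lra|exact H8|lra]).
  assert (H6 : (40044908541269171/40000000000000000) <= exp (718134/640000000)) by (apply (lo_step (718134/1280000000) _ (500280599646770551/500000000000000000)); [lra|lra|exact H7|lra]).
  assert (H5 : (501123343774566439/500000000000000000) <= exp (718134/320000000)) by (apply (lo_step (718134/640000000) _ (40044908541269171/40000000000000000)); [lra|lra|exact H6|lra]).
  assert (H4 : (31390575709475287/31250000000000000) <= exp (718134/160000000)) by (apply (lo_step (718134/320000000) _ (501123343774566439/500000000000000000)); [lra|lra|exact H5|lra]).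
  assert (H3 : (201803416242647023/200000000000000000) <= exp (718134/80000000)) by (apply (lo_step (718134/160000000) _ (31390575709475287/31250000000000000)); [lra|lra|exact H4|lra]).
  assert (H2 : (1018115470180076307/1000000000000000000) <= exp (718134/40000000)) by (apply (lo_step (718134/80000000) _ (201803416242647023/200000000000000000)); [lra|lra|exact H3|lra]).
  assert (H1 : (1036559110619997847/1000000000000000000) <= exp (718134/20000000)) by (apply (lo_step (718134/40000000) _ (1018115470180076307/1000000000000000000)); [lra|lra|exact H2|lra]).
  assert (H0 : (1074454789809320933/1000000000000000000) <= exp (718134/10000000)) by (apply (lo_step (718134/20000000) _ (1036559110619997847/1000000000000000000)); [lra|lra|exact H1|lra]).
  replace (718134/10000000) with (718134/10000000) by lra. lra.
Qed.

Lemma expINR n t : exp (INR n * t) = exp t ^ n.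
Proof. induction n as [|n IH]; simpl pow.
  - simpl. rewrite Rmult_0_l. apply exp_0.
  - rewrite S_INR. replace ((INR n + 1)*t) with (t + INR n * t) by ring.
    rewrite exp_plus, IH. reflexivity. Qed.

Lemma eval4_exp b x : eval4 b x = Pf (b 0%nat) (b 1%nat) (b 2%nat) (b 3%nat) (b 4%nat) x.
Proof. unfold eval4, Pf. simpl. ring. Qed.

Lemma evalT t a x : eval4 (T t a) x =
  a 0%nat + a 1%nat * (exp t * x) + a 2%nat * (exp t ^ 8 * x^2)
  + a 3%nat * (exp t ^ 27 * x^3) + a 4%nat * (exp t ^ 64 * x^4).
Proof. rewrite eval4_exp. unfold Pf, T. rewrite !expINR. simpl Nat.pow. ring. Qed.

Definition kf (u : R) := u^6 + u^5 + u^4 - u^2 - 2*u - 1.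

Lemma kmono a b : 1 <= a -> a < b -> kf a < kf b.
Proof. intros Ha Hab. unfold kf.
  assert (a^6 <= b^6) by (apply pow_incr; lra). assert (a^5 <= b^5) by (apply pow_incr; lra).
  assert (1 <= a^2) by nra. assert (a^2 < b^2) by nra.
  assert (b^4 - a^4 = (b^2 - a^2)*(b^2+a^2)) by ring.
  assert (b^4 - a^4 >= 2*(b^2 - a^2)) by nra.
  assert (b^2 - a^2 > 2*(b-a)) by nra. lra. Qed.

Lemma kcont : continuity kf.
Proof. unfold kf. reg. Qed.

Lemma detid s : 1*s^8*s^64 + 2*s*s^8*s^27 - (s^8)^3 - s^2*s^64 - 1*(s^27)^2
  = s^24 * (s^6 - 1)^2 * kf (s^6).
Proof. unfold kf. ring. Qed.

Lemma exp6 t : exp t ^ 6 = exp (6*t).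
Proof. rewrite <- expINR. f_equal. f_equal. simpl. ring. Qed.

Lemma pp_of t : 0 < t -> 0 <= kf (exp t ^ 6) -> positivity_preserver t.
Proof.
  intros Ht Hk a Ha x. rewrite evalT. set (s := exp t) in *.
  assert (Hs : 1 < s) by (unfold s; rewrite <- exp_0; apply exp_increasing; auto).
  assert (HP : forall y, 0 <= Pf (a 0%nat) (a 1%nat) (a 2%nat) (a 3%nat) (a 4%nat) y).
  { intros y. rewrite <- eval4_exp. apply Ha. }
  replace (a 0%nat + a 1%nat * (s * x) + a 2%nat * (s ^ 8 * x ^ 2) + a 3%nat * (s ^ 27 * x ^ 3) +
    a 4%nat * (s ^ 64 * x ^ 4)) with
    (a 0%nat * 1 + a 1%nat * (s * x) + a 2%nat * (s ^ 8 * x ^ 2) + a 3%nat * (s ^ 27 * x ^ 3) +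
    a 4%nat * (s ^ 64 * x ^ 4)) by ring.
  apply main_L; auto.
  intros v0 v1 v2.
  replace (Qf 1 (s * x) (s ^ 8 * x ^ 2) (s ^ 27 * x ^ 3) (s ^ 64 * x ^ 4) v0 v1 v2)
    with (Qf 1 s (s^8) (s^27) (s^64) v0 (v1*x) (v2*x^2)) by (unfold Qf; ring).
  apply psd3.
  - lra.
  - assert (1 < s^6) by (apply Rlt_pow_R1; auto; lia).
    assert (0 < s^2) by (apply pow_lt; lra).
    replace (1*s^8 - s^2) with (s^2*(s^6-1)) by ring. apply Rmult_lt_0_compat; lra.
  - replace (1 * s ^ 8 * s ^ 64 + 2 * s * s ^ 8 * s ^ 27 - (s ^ 8) ^ 3 - s ^ 2 * s ^ 64 - 1 * (s ^ 27) ^ 2)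
      with (s^24 * (s^6 - 1)^2 * kf (s^6)) by (unfold kf; ring).
    apply Rmult_le_pos; auto. apply Rmult_le_pos. left; apply pow_lt; lra. apply pow2_ge_0.
Qed.

Lemma not_pp_of t : 0 < t -> kf (exp t ^ 6) < 0 -> ~ positivity_preserver t.
Proof.
  intros Ht Hk HPP. set (s := exp t) in *.
  assert (Hs : 1 < s) by (unfold s; rewrite <- exp_0; apply exp_increasing; auto).
  set (l0 := 1). set (l1 := s). set (l2 := s^8). set (l3 := s^27). set (l4 := s^64).
  set (v0 := l2*l4 - l3^2). set (v1 := l2*l3 - l1*l4). set (v2 := l1*l3 - l2^2).
  set (a := fun k : nat => match k with 0%nat => v0^2 | 1%nat => 2*v0*v1
     | 2%nat => v1^2 + 2*v0*v2 | 3%nat => 2*v1*v2 | 4%nat => v2^2 | _ => 0 end).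
  assert (Ha : nonneg4 a).
  { intros x. rewrite eval4_exp. unfold Pf, a.
    replace (v0 ^ 2 + 2 * v0 * v1 * x + (v1 ^ 2 + 2 * v0 * v2) * x ^ 2 + 2 * v1 * v2 * x ^ 3 + v2 ^ 2 * x ^ 4)
      with ((v0 + v1*x + v2*x^2)^2) by ring. apply pow2_ge_0. }
  specialize (HPP a Ha 1). rewrite evalT in HPP. fold s in HPP.
  unfold a in HPP.
  assert (E : v0 ^ 2 + 2 * v0 * v1 * (s * 1) + (v1 ^ 2 + 2 * v0 * v2) * (s ^ 8 * 1 ^ 2) +
     2 * v1 * v2 * (s ^ 27 * 1 ^ 3) + v2 ^ 2 * (s ^ 64 * 1 ^ 4)
     = (s^24 * (s^6 - 1)^2 * kf (s^6)) * (s^54 * (s^18 - 1))).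
  { unfold v0, v1, v2, l0, l1, l2, l3, l4, kf. ring. }
  rewrite E in HPP.
  assert (1 < s^6) by (apply Rlt_pow_R1; auto; lia).
  assert (1 < s^18) by (apply Rlt_pow_R1; auto; lia).
  assert (0 < s^24) by (apply pow_lt; lra).
  assert (0 < s^54) by (apply pow_lt; lra).
  assert (0 < (s^6-1)^2) by (apply sq_pos; lra).
  assert (0 < s^24 * (s^6 - 1)^2) by (apply Rmult_lt_0_compat; lra).
  assert (s^24 * (s^6 - 1)^2 * kf (s^6) < 0).
  { replace 0 with (s^24 * (s^6 - 1)^2 * 0) by ring. apply Rmult_lt_compat_l; auto. }
  assert (0 < s^54 * (s^18 - 1)) by (apply Rmult_lt_0_compat; lra).
  nra.
Qed.

Theorem proposition6p1 :
  exists tau : R,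
    119688 / 10000000 < tau < 119689 / 10000000 /\
    (forall t : R, 0 < t < tau -> ~ positivity_preserver t) /\
    positivity_preserver 0 /\
    (forall t : R, tau <= t -> positivity_preserver t).
Proof.
  assert (Hka : kf (10744543/10000000) < 0) by (unfold kf; lra).
  assert (Hkb : 0 < kf (10744547/10000000)) by (unfold kf; lra).
  destruct (IVT kf (10744543/10000000) (10744547/10000000) kcont) as [u [[Hu1 Hu2] Hku]];
    [lra|auto|auto|].
  assert (Hu1' : 10744543/10000000 < u).
  { destruct Hu1 as [|E]; auto. rewrite <- E in Hku. lra. }
  assert (Hu2' : u < 10744547/10000000).
  { destruct Hu2 as [|E]; auto. rewrite E in Hku. lra. }
  assert (Hu0 : 0 < u) by lra.
  exists (ln u / 6).
  assert (Heu : exp (6 * (ln u / 6)) = u).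
  { replace (6 * (ln u / 6)) with (ln u) by field. apply exp_ln; auto. }
  pose proof exp_up_a. pose proof exp_lo_b.
  assert (Hlo : 718128/10000000 < ln u).
  { apply exp_lt_inv. rewrite exp_ln; lra. }
  assert (Hhi : ln u < 718134/10000000).
  { apply exp_lt_inv. rewrite exp_ln; lra. }
  split; [split; lra|]. split; [|split].
  - intros t [Ht0 Ht]. apply not_pp_of; auto.
    rewrite exp6. assert (exp (6*t) < u) by (rewrite <- Heu; apply exp_increasing; lra).
    assert (1 <= exp (6*t)) by (rewrite <- exp_0; left; apply exp_increasing; lra).
    rewrite <- Hku. apply kmono; auto.
  - intros a Ha x. rewrite evalT. rewrite exp_0, !pow1. specialize (Ha x). rewrite eval4_exp in Ha. unfold Pf in Ha. lra.
  - intros t Ht. apply pp_of; [lra|].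
    rewrite exp6. assert (u <= exp (6*t)).
    { rewrite <- Heu. destruct Ht as [Ht|Ht]; [left; apply exp_increasing; lra| rewrite Ht; lra]. }
    destruct H1 as [H1|H1]; [|rewrite <- H1; lra].
    left. rewrite <- Hku. apply kmono; auto. lra.
Qed.
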